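(* Let $n>1$ be an integer with $F_n=D_n$, and let $p$ be the largest prime divisor of $n$. Then $F_{n/p}=D_{n/p}$ and $F_{np}=D_{np}$.
   Context: For a composite integer $m$, let $d(m)$ denote the largest divisor of $m$ with $1<d(m)<m$. Define $f$ on integers $m>1$ by $f(m)=m-1$ if $m$ is prime and $f(m)=m-d(m)$ if $m$ is composite. Let $f^{(0)}(m)=m$, $f^{(i)}=f\circ f^{(i-1)}$. Define $F_m=\{m,f(m),f^{(2)}(m),\dots,1\}$, the set of iterates of $f$ from $m$ up to and including the first occurrence of $1$ (with $F_1=\{1\}$), and let $D_m$ be the set of positive divisors of $m$. *)

(* Defs.v *)
From mathcomp Require Import all_boot.
Set Implicit Arguments. Unset Strict Implicit. Unset Printing Implicit Defensive.

(* d(m): the largest divisor d of m with 1 < d < m (meaningful for composite m;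
   equals 0 when no such divisor exists). *)
Definition dlarge (m : nat) : nat := \max_(d < m | (1 < d) && (d %| m)) d.

Definition fstep (m : nat) : nat := if prime m then m.-1 else m - dlarge m.

(* F_m: the iterates f^(i)(m), up to and including the first occurrence of 1. *)
Definition inF (m x : nat) : Prop :=
  exists i, iter i fstep m = x /\ (forall j, j < i -> iter j fstep m != 1).

Definition F_eq_D (m : nat) : Prop :=
  forall x, inF m x <-> (0 < x) && (x %| m).

(* Main.v *)
Require Import Defs.
From mathcomp Require Import all_boot.
From mathcomp Require Import zify.

Lemma fstep1 : fstep 1 = 1.
Proof. by rewrite /fstep /dlarge big1 // => -[[|]]. Qed.

Lemma fstepE m : 1 < m -> fstep m = m - m %/ pdiv m.
Proof.
move=> m1; rewrite /fstep; case: ifP => pm.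
  by rewrite pdiv_id // divnn ltnW // subn1.
have q1 := pdiv_prime m1; have q2 := prime_gt1 q1.
have qd := pdiv_dvd m.
have m0 : 0 < m by lia.
have qm : pdiv m < m.
  rewrite ltn_neqAle pdiv_leq // andbT; apply/negP => /eqP E.
  by move: q1; rewrite E pm.
congr (_ - _); apply/eqP; rewrite eqn_leq; apply/andP; split.
  apply/bigmax_leqP => d /andP [d1 dd].
  have dm := ltn_ord d.
  move: (nat_of_ord d) dm d1 dd => k dm d1 dd.
  move: dd => /dvdnP [e He].
  have e1 : 1 < e by nia.
  have H : pdiv m <= e by apply: (pdiv_min_dvd e1); rewrite He dvdn_mulr.
  have := leq_div2l m (pdiv_gt0 m) H.
  have : m %/ e = k by rewrite He mulKn //; lia.
  lia.
have lt : m %/ pdiv m < m by rewrite ltn_Pdiv.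
have := leq_bigmax_cond (F := fun d : 'I_m => nat_of_ord d)
  (P := fun d : 'I_m => (1 < d) && (d %| m)) (Ordinal lt).
apply; rewrite /= dvdn_div //= andbT.
rewrite ltn_divRL //; lia.
Qed.

Definition orb x y := exists i, iter i fstep x = y.

Lemma iter1 i : iter i fstep 1 = 1.
Proof. by elim: i => //= i ->; rewrite fstep1. Qed.

Lemma inF_orb m x : inF m x <-> orb m x.
Proof.
split; first by case=> i [H _]; exists i.
case=> i; elim: i {-2}i (leqnn i) => [|N IH] i iN Hi.
  by exists i; split => // j; lia.
case: (boolP [exists j : 'I_i, iter j fstep m == 1]).
  case/existsP => j /eqP Hj.
  apply: (IH j); first by have := ltn_ord j; lia.
  by rewrite Hj -Hi -(subnK (ltnW (ltn_ord j))) iterD Hj iter1.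
move/existsPn => H; exists i; split => // j ji.
exact: (H (Ordinal ji)).
Qed.

Lemma orb_step a y : orb a y <-> y = a \/ orb (fstep a) y.
Proof.
split.
  case=> [[|i]] <-; first by left.
  by right; exists i; rewrite iterSr.
case=> [->|[i <-]]; first by exists 0.
by exists i.+1; rewrite iterSr.
Qed.

Lemma orb1 y : orb 1 y <-> y = 1.
Proof. by split=> [[i <-]|->]; [rewrite iter1 | exists 0]. Qed.

Lemma fstep_le a : fstep a <= a.
Proof. rewrite /fstep; case: ifP => _; lia. Qed.

Lemma orb_le a y : orb a y -> y <= a.
Proof.
case=> i <-; elim: i => //= i IH; exact: leq_trans (fstep_le _) IH.
Qed.

Lemma fstep_pos {x} : 0 < x -> 0 < fstep x.
Proof.
case: x => // -[|x] _; first by rewrite fstep1.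
rewrite fstepE //; have := ltn_Pdiv (prime_gt1 (pdiv_prime (isT : 1 < x.+2))) (isT : 0 < x.+2).
lia.
Qed.

Lemma fstep_lt {x} : 1 < x -> fstep x < x.
Proof.
move=> x1; rewrite fstepE //.
have q1 := prime_gt1 (pdiv_prime x1).
have : 0 < x %/ pdiv x.
  by rewrite divn_gt0 ?pdiv_gt0 // pdiv_leq //; lia.
lia.
Qed.

Definition P p x := forall r, prime r -> r %| x -> r < p.

Lemma fstep_fact x : 1 < x -> fstep x = x %/ pdiv x * (pdiv x).-1.
Proof.
move=> x1; rewrite fstepE //; have E := esym (divnK (pdiv_dvd x)).
by rewrite {1}E -subn1 mulnBr muln1.
Qed.

Lemma P_fstep {p x} : 0 < x -> P p x -> P p (fstep x).
Proof.
case: x => // -[|x] _ Hx; first by rewrite fstep1.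
have x1 : 1 < x.+2 by [].
have qp : pdiv x.+2 < p := Hx _ (pdiv_prime x1) (pdiv_dvd _).
move=> r pr; rewrite fstep_fact // Euclid_dvdM // => /orP [] rd.
  by apply: Hx pr (dvdn_trans rd (dvdn_div (pdiv_dvd _))).
have := dvdn_leq _ rd; have := prime_gt1 (pdiv_prime x1); have := prime_gt1 pr.
move=> r1 q1 H; have := H ltac:(lia); lia.
Qed.

Lemma orb_P {p x y} : 0 < x -> P p x -> orb x y -> 0 < y /\ P p y.
Proof.
move=> x0 Px [i <-]; elim: i => //= i [IH1 IH2]; split.
  exact: fstep_pos. exact: P_fstep.
Qed.

Lemma pdiv_mul p x j : prime p -> 1 < x -> P p x -> pdiv (x * p ^ j) = pdiv x.
Proof.
move=> pp x1 Px.
have p1 := prime_gt1 pp.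
have xj : 1 < x * p ^ j by apply: leq_trans x1 (leq_pmulr _ _); rewrite expn_gt0; lia.
apply/eqP; rewrite eqn_leq; apply/andP; split.
  apply: pdiv_min_dvd; last exact: dvdn_mulr (pdiv_dvd _).
  exact: prime_gt1 (pdiv_prime x1).
have pq := pdiv_prime xj.
have := pdiv_dvd (x * p ^ j); rewrite Euclid_dvdM // => /orP [] H.
  exact: pdiv_min_dvd (prime_gt1 pq) H.
have := Px _ (pdiv_prime x1) (pdiv_dvd _).
rewrite Euclid_dvdX // in H; move/andP: H => [H _].
rewrite (prime_nt_dvdP _ _ H) //; [lia | by case: eqP pq => // ->].
Qed.

Lemma fstep_mul p x j : prime p -> 1 < x -> P p x ->
  fstep (x * p ^ j) = fstep x * p ^ j.
Proof.
move=> pp x1 Px.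
have p1 := prime_gt1 pp.
have xj : 1 < x * p ^ j by apply: leq_trans x1 (leq_pmulr _ _); rewrite expn_gt0; lia.
rewrite !fstepE // pdiv_mul // mulnBl divn_mulAC //; exact: pdiv_dvd.
Qed.

Lemma fstep_pow p j : prime p -> fstep (p ^ j.+1) = (p - 1) * p ^ j.
Proof.
move=> pp; have p1 := prime_gt1 pp.
have pj : 1 < p ^ j.+1 by rewrite -(exp1n j.+1) ltn_exp2r.
rewrite fstep_fact // pdiv_pfactor // expnS mulKn; last lia.
by rewrite mulnC subn1.
Qed.

Lemma L1 p x j y : prime p -> 0 < x -> P p x -> 0 < j ->
  orb (x * p ^ j) y <->
  (exists z, orb x z /\ y = z * p ^ j) \/ orb ((p - 1) * p ^ j.-1) y.
Proof.
move=> pp; case: j => // j; rewrite -pred_Sn => + + _.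
elim/ltn_ind: x y => x IH y x0 Px.
case: (ltngtP x 1) => [|x1|->]; first lia.
  have h1 := fstep_pos x0; have h2 := P_fstep x0 Px; have h3 := fstep_lt x1.
  rewrite orb_step fstep_mul // IH //.
  split.
    case=> [->|[[z [H1 ->]]|H]].
    + by left; exists x; split => //; exists 0.
    + by left; exists z; split => //; rewrite orb_step; right.
    + by right.
  case=> [[z [H1 ->]]|H]; last by right; right.
  case/orb_step: H1 => [->|H1]; first by left.
  by right; left; exists z.
rewrite mul1n orb_step fstep_pow //.
split.
  case=> [->|H]; last by right.
  left; exists 1; split; [by exists 0 | by rewrite mul1n].
case=> [[z [H1 ->]]|H]; last by right.
by left; move: H1 => /(proj1 (orb1 _)) ->; rewrite mul1n.
Qed.

Lemma div_split {m p j y} : prime p -> coprime m p ->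
  y %| m * p ^ j.+1 -> (p ^ j.+1 %| y) \/ (y %| m * p ^ j).
Proof.
move=> pp cmp; have p0 := prime_gt0 pp.
elim: j y => [|j IH] y.
  case: (boolP (p %| y)) => [H _|H]; first by left.
  move=> D; right; rewrite expn0 muln1.
  have cy : coprime y p by rewrite coprime_sym prime_coprime.
  by rewrite -(Gauss_dvdl _ cy) -(expn1 p).
case: (boolP (p %| y)) => [/dvdnP [y' ->] D|H D].
  have D' : y' %| m * p ^ j.+1.
    by rewrite -(dvdn_pmul2r p0) -mulnA -expnSr.
  case: (IH _ D') => H; [left | right].
    by rewrite expnSr dvdn_pmul2r.
  by rewrite expnSr mulnA dvdn_pmul2r.
right; apply: dvdn_mulr.
have cy : coprime y (p ^ j.+2) by rewrite coprimeXr // coprime_sym prime_coprime.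
by rewrite -(Gauss_dvdl _ cy).
Qed.

Lemma P_pred {p} : prime p -> P p (p - 1).
Proof.
move=> pp r pr rd; have := dvdn_leq _ rd; have := prime_gt1 pp; lia.
Qed.

Lemma L3 p i x y : prime p -> 0 < x -> P p x ->
  (orb (x * p ^ i.+1) y /\ ~~ (p %| y)) <-> orb (p - 1) y.
Proof.
move=> pp; have p1 := prime_gt1 pp; have Pp := P_pred pp.
have p10 : 0 < p - 1 by lia.
elim: i x => [|i IH] x x0 Px; rewrite L1 //=.
  split.
    case=> -[[z [_ ->]]|H] np; last by rewrite expn0 muln1 in H.
    by rewrite dvdn_mull ?dvdn_exp in np.
  move=> H; split; first by right; rewrite expn0 muln1.
  have [_ Py] := orb_P p10 Pp H.
  by apply/negP => /(Py _ pp); rewrite ltnn.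
split.
  case=> -[[z [_ ->]]|H] np; last by apply/(IH (p - 1)) => //.
  by rewrite dvdn_mull ?dvdn_exp in np.
move/(IH (p - 1)) => /(_ p10 Pp) [H np]; split => //; by right.
Qed.

Lemma L2 p j y : prime p ->
  (forall z, orb (p - 1) z <-> 0 < z /\ z %| p - 1) ->
  orb ((p - 1) * p ^ j) y <-> 0 < y /\ y %| (p - 1) * p ^ j.
Proof.
move=> pp H2; have p1 := prime_gt1 pp; have Pp := P_pred pp.
have p10 : 0 < p - 1 by lia.
have cop : coprime (p - 1) p.
  have E : p = (p - 1).+1 by lia.
  by rewrite [X in coprime _ X]E coprimenS.
elim: j y => [|j IH] y; first by rewrite expn0 muln1.
rewrite L1 //= IH; split.
  case=> [[z [/H2 [z0 zd] ->]]|[y0 yd]].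
    split; first by rewrite muln_gt0 z0 expn_gt0; lia.
    exact: dvdn_mul.
  split => //; apply: dvdn_trans yd _.
  by rewrite expnSr mulnA dvdn_mulr.
move=> [y0 yd]; case: (div_split pp cop yd) => D; last by right.
left; move/dvdnP: D => [z Ez]; exists z; split => //.
apply/H2; split; first by move: y0; rewrite Ez muln_gt0 => /andP [].
by rewrite -(@dvdn_pmul2r (p ^ j.+1)) -?Ez // expn_gt0; lia.
Qed.

Lemma FD_orb N : F_eq_D N <-> (forall y, orb N y <-> 0 < y /\ y %| N).
Proof.
split=> H y.
  by rewrite -inF_orb H; split => [/andP|[-> ->]].
by rewrite inF_orb H; split => [[-> ->]|/andP].
Qed.

Theorem proposition5 (n : nat) (hn : 1 < n) (hF : F_eq_D n) :
  F_eq_D (n %/ max_pdiv n) /\ F_eq_D (n * max_pdiv n).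
Proof.
move/FD_orb: hF => hF.
have pp := max_pdiv_prime hn; move: pp hF.
set p := max_pdiv n => pp hF.
have n0 : 0 < n by lia.
have p1 := prime_gt1 pp.
have [m cop E] := pfactor_coprime pp n0.
have k0 : 0 < logn p n.
  by rewrite logn_gt0 mem_primes pp n0 max_pdiv_dvd.
move: E; case Ek : (logn p n) k0 => [|k] // _ E.
have m0 : 0 < m by move: n0; rewrite E muln_gt0 => /andP [].
have Pm : P p m.
  move=> r pr rd.
  have rn : r %| n by rewrite E dvdn_mulr.
  have : r <= p by apply: max_pdiv_max; rewrite mem_primes pr n0.
  rewrite leq_eqVlt => /orP [/eqP er|//].
  by move: cop; rewrite prime_coprime // -er rd.
have H2 : forall z, orb (p - 1) z <-> 0 < z /\ z %| m.
  move=> z; rewrite -(L3 p k m z pp m0 Pm) -E hF; split.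
    move=> [[z0 zn] np]; split => //.
    have cz : coprime z (p ^ k.+1) by rewrite coprimeXr // coprime_sym prime_coprime.
    by move: zn; rewrite E Gauss_dvdl.
  move=> [z0 zm]; split; first by split => //; rewrite E dvdn_mulr.
  apply/negP => pz; move: cop; rewrite prime_coprime // (dvdn_trans pz zm).
  by [].
have Em : m = p - 1.
  apply/eqP; rewrite eqn_leq; apply/andP; split.
    apply: orb_le; apply/(proj2 (H2 m)); split => //.
  apply: dvdn_leq => //; apply: (proj2 (proj1 (H2 (p - 1)) _)).
  by exists 0.
rewrite Em in E H2.
have H2' : forall z, orb (p - 1) z <-> 0 < z /\ z %| p - 1 by [].
split; apply/FD_orb => y.
  have -> : n %/ p = (p - 1) * p ^ k by rewrite E expnSr mulnA mulnK //; lia.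
  exact: L2.
have -> : n * p = (p - 1) * p ^ k.+2 by rewrite E [in RHS]expnSr mulnA.
exact: L2.
Qed.
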